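(* The following six elements of $\Delta$ are all equal: \begin{gather*} qABC + q^2A^2+q^{-2}B^2+q^2C^2-q A\alpha -q^{-1} B\beta -q C\gamma,\\ qBCA + q^2A^2 + q^2B^2+q^{-2}C^2 -q A\alpha -qB\beta -q^{-1}C\gamma,\\ qCAB + q^{-2}A^2+q^2B^2 +q^2 C^2 -q^{-1} A\alpha -q B \beta -q C\gamma,\\ q^{-1}CBA + q^{-2}A^2+q^{2}B^2+q^{-2}C^2-q^{-1}A\alpha -q B\beta - q^{-1} C\gamma,\\ q^{-1}ACB + q^{-2}A^2 + q^{-2}B^2+q^{2}C^2 -q^{-1} A\alpha -q^{-1}B\beta -q C\gamma,\\ q^{-1}BAC + q^{2}A^2+q^{-2}B^2 +q^{-2}C^2 -q A\alpha -q^{-1} B \beta -q^{-1} C\gamma. \end{gather*}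
   Context: Let $\mathbb F$ be a field and fix a nonzero $q\in\mathbb F$ with $q^4\neq 1$. The universal Askey--Wilson algebra $\Delta$ is the associative $\mathbb F$-algebra with 1 with generators $A,B,C$ subject to the relations that each of $A+\frac{qBC-q^{-1}CB}{q^2-q^{-2}}$, $B+\frac{qCA-q^{-1}AC}{q^2-q^{-2}}$, $C+\frac{qAB-q^{-1}BA}{q^2-q^{-2}}$ is central; $\alpha,\beta,\gamma$ denote these three central elements (in order) each multiplied by $q+q^{-1}$. *)

(* Defs.v *)
From HB Require Import structures.
From mathcomp Require Import all_boot all_order all_algebra.
Set Implicit Arguments. Unset Strict Implicit. Unset Printing Implicit Defensive.
Import GRing.Theory.
Local Open Scope ring_scope.

(* The universal Askey--Wilson algebra is presented by generators A, B, C and the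
   relations that the three elements below are central.  We work in an arbitrary
   associative F-algebra V with 1 containing A, B, C satisfying these relations;
   identities valid in all such V are exactly the identities valid in Delta
   (Delta itself is such a V, and Delta maps to every such V). *)

Section AW.
Variables (F : fieldType) (V : algType F) (q : F).

Definition AWcen (X Y Z : V) : V :=
  X + (q ^+ 2 - q ^- 2)^-1 *: (q *: (Y * Z) - q^-1 *: (Z * Y)).

Definition AWalpha (A B C : V) : V := (q + q^-1) *: AWcen A B C.
Definition AWbeta  (A B C : V) : V := (q + q^-1) *: AWcen B C A.
Definition AWgamma (A B C : V) : V := (q + q^-1) *: AWcen C A B.

Definition AW_relations (A B C : V) : Prop :=
  (forall x : V, GRing.comm (AWcen A B C) x) /\
  (forall x : V, GRing.comm (AWcen B C A) x) /\
  (forall x : V, GRing.comm (AWcen C A B) x).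
End AW.

(* Main.v *)
Require Import Defs.
From mathcomp Require Import all_boot all_order all_algebra.
From mathcomp Require Import ring.
Import GRing.Theory.
Local Open Scope ring_scope.

Section Helper.
Variables (F : fieldType) (V : algType F).
Variable m : 'I_7 -> V.

Definition psi (c : 'I_7 -> F) : V := \sum_(i < 7) c i *: m i.
Definition cadd (u v : 'I_7 -> F) := fun i => u i + v i.
Definition copp (u : 'I_7 -> F) := fun i => - u i.
Definition cscale (k : F) (u : 'I_7 -> F) := fun i => k * u i.
Definition cbas (k : nat) : 'I_7 -> F := fun i => if val i == k then 1 else 0.

Lemma psiD u v : psi u + psi v = psi (cadd u v).
Proof. by rewrite /psi -big_split; apply: eq_bigr => i _; rewrite scalerDl. Qed.
Lemma psiN u : - psi u = psi (copp u).
Proof. by rewrite /psi -sumrN; apply: eq_bigr => i _; rewrite scaleNr. Qed.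
Lemma psiZ k u : k *: psi u = psi (cscale k u).
Proof. by rewrite /psi scaler_sumr; apply: eq_bigr => i _; rewrite scalerA. Qed.
Lemma psi_ext u w : (forall i, u i = w i) -> psi u = psi w.
Proof. by move=> h; apply: eq_bigr => i _; rewrite h. Qed.
Lemma psi_bas (k : 'I_7) : m k = psi (cbas k).
Proof.
rewrite /psi (bigD1 k) //= big1 ?addr0 /cbas ?eqxx ?scale1r //.
by move=> i /negbTE; rewrite -val_eqE /= => ->; rewrite scale0r.
Qed.
End Helper.
Arguments psi {F V}.
Arguments cadd {F}.
Arguments copp {F}.
Arguments cscale {F}.
Arguments cbas {F}.
Arguments psi_bas {F V}.
Arguments psiD {F V}.
Arguments psiN {F V}.
Arguments psiZ {F V}.
Arguments psi_ext {F V}.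


Theorem lemma6p1 (F : fieldType) (V : algType F) (q : F) (A B C : V) :
  q != 0 -> q ^+ 4 != 1 -> AW_relations q A B C ->
  let al := AWalpha q A B C in
  let be := AWbeta q A B C in
  let ga := AWgamma q A B C in
  let E1 := q *: (A * B * C) + q ^+ 2 *: (A ^+ 2) + q ^- 2 *: (B ^+ 2)
            + q ^+ 2 *: (C ^+ 2) - q *: (A * al) - q^-1 *: (B * be) - q *: (C * ga) in
  let E2 := q *: (B * C * A) + q ^+ 2 *: (A ^+ 2) + q ^+ 2 *: (B ^+ 2)
            + q ^- 2 *: (C ^+ 2) - q *: (A * al) - q *: (B * be) - q^-1 *: (C * ga) in
  let E3 := q *: (C * A * B) + q ^- 2 *: (A ^+ 2) + q ^+ 2 *: (B ^+ 2)
            + q ^+ 2 *: (C ^+ 2) - q^-1 *: (A * al) - q *: (B * be) - q *: (C * ga) in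
  let E4 := q^-1 *: (C * B * A) + q ^- 2 *: (A ^+ 2) + q ^+ 2 *: (B ^+ 2)
            + q ^- 2 *: (C ^+ 2) - q^-1 *: (A * al) - q *: (B * be) - q^-1 *: (C * ga) in
  let E5 := q^-1 *: (A * C * B) + q ^- 2 *: (A ^+ 2) + q ^- 2 *: (B ^+ 2)
            + q ^+ 2 *: (C ^+ 2) - q^-1 *: (A * al) - q^-1 *: (B * be) - q *: (C * ga) in
  let E6 := q^-1 *: (B * A * C) + q ^+ 2 *: (A ^+ 2) + q ^- 2 *: (B ^+ 2)
            + q ^- 2 *: (C ^+ 2) - q *: (A * al) - q^-1 *: (B * be) - q^-1 *: (C * ga) in
  [/\ E1 = E2, E2 = E3, E3 = E4, E4 = E5 & E5 = E6].
Proof.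
move=> qnz q4 [hA [_ hC]].
have dnz : q ^+ 2 - q ^- 2 != 0.
  apply/eqP => h; move/eqP: q4; apply.
  have : q ^+ 2 * (q ^+ 2 - q ^- 2) = 0 by rewrite h mulr0.
  have -> : q ^+ 2 * (q ^+ 2 - q ^- 2) = q ^+ 4 - 1 by field.
  by move/eqP; rewrite subr_eq0 => /eqP.
have knz : (q ^+ 2 - q ^- 2)^-1 != 0 by rewrite invr_eq0.
have eqC : q *: (A * B * C) - q^-1 *: (B * A * C) = q *: (C * A * B) - q^-1 *: (C * B * A).
  move: (hC C); rewrite /GRing.comm /AWcen mulrDl mulrDr -scalerAl -scalerAr.
  rewrite mulrBl mulrBr -!scalerAl -!scalerAr !mulrA => /addrI /(scalerI knz).
  done.
have eqA : q *: (B * C * A) - q^-1 *: (C * B * A) = q *: (A * B * C) - q^-1 *: (A * C * B).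
  move: (hA A); rewrite /GRing.comm /AWcen mulrDl mulrDr -scalerAl -scalerAr.
  rewrite mulrBl mulrBr -!scalerAl -!scalerAr !mulrA => /addrI /(scalerI knz).
  done.
set c := q^-1 * q^-1.
have hABC : A * B * C = C * A * B + c *: (B * A * C) - c *: (C * B * A).
  apply: (scalerI qnz); rewrite !scalerDr scalerN !scalerA.
  have -> : q * c = q^-1 by rewrite /c; field.
  move/eqP: eqC; rewrite subr_eq => /eqP ->.
  by rewrite addrAC.
have hBCA : B * C * A = A * B * C + c *: (C * B * A) - c *: (A * C * B).
  apply: (scalerI qnz); rewrite !scalerDr scalerN !scalerA.
  have -> : q * c = q^-1 by rewrite /c; field.
  move/eqP: eqA; rewrite subr_eq => /eqP ->.
  by rewrite addrAC.
cbv zeta.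
rewrite /AWalpha /AWbeta /AWgamma /AWcen.
rewrite !expr2 -!scalerAr !mulrDr ?mulrN -!scalerAr !mulrDr ?mulrN -?scalerAr !mulrA hBCA hABC.
pose m (i : 'I_7) := nth 0 [:: A * A; B * B; C * C; C * A * B; B * A * C; C * B * A; A * C * B] i.
have e0 : A * A = psi m (cbas 0%N) by exact: (psi_bas m (Ordinal (isT : 0 < 7)%N)).
have e1 : B * B = psi m (cbas 1%N) by exact: (psi_bas m (Ordinal (isT : 1 < 7)%N)).
have e2 : C * C = psi m (cbas 2%N) by exact: (psi_bas m (Ordinal (isT : 2 < 7)%N)).
have e3 : C * A * B = psi m (cbas 3%N) by exact: (psi_bas m (Ordinal (isT : 3 < 7)%N)).
have e4 : B * A * C = psi m (cbas 4%N) by exact: (psi_bas m (Ordinal (isT : 4 < 7)%N)).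
have e5 : C * B * A = psi m (cbas 5%N) by exact: (psi_bas m (Ordinal (isT : 5 < 7)%N)).
have e6 : A * C * B = psi m (cbas 6%N) by exact: (psi_bas m (Ordinal (isT : 6 < 7)%N)).
rewrite e3 e4 e5 e6 e0 e1 e2.
rewrite ?(psiZ m, psiN m, psiD m).
have q2 : q * q - (q * q)^-1 != 0 by rewrite -expr2.
have h4 : q * q * (q * q) - 1 != 0 by rewrite subr_eq0 -!expr2 -exprM.
split; apply: psi_ext => -[[|[|[|[|[|[|[|//]]]]]]] Hi];
  rewrite /cadd /copp /cscale /cbas /c /=; field.
all: by rewrite qnz h4.
Qed.
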